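(* Let $R$ be an associative ring with identity and $M$ a left $R$-module which is projective in $\sigma[M]$. Let $SP(M)=\{N\in\Lambda^{fi}(M)\mid N\text{ is semiprime in }M\}\cup\{M\}$, ordered by inclusion. Then $SP(M)$ is a frame. Moreover, $SP(M)\cong\mathcal{O}(LgSpec(M))$ canonically as frames.
   Context: $\Lambda^{fi}(M)$ is the set of fully invariant submodules of $M$. For $N,L\leq M$, $N_ML=\sum\{f(N)\mid f\in\mathrm{Hom}_R(M,L)\}$. A submodule $N\in\Lambda^{fi}(M)$ with $N\neq M$ is semiprime in $M$ if whenever $K\in\Lambda^{fi}(M)$ and $K_MK\subseteq N$, then $K\subseteq N$. $LgSpec(M)$ is the set of submodules $P\neq M$ such that for all $N,L\in\Lambda^{fi}(M)$, $N_ML\subseteq P$ implies $N\subseteq P$ or $L\subseteq P$, with topology whose open sets are $\mathcal{U}(N)=\{P\in LgSpec(M)\mid N\nsubseteq P\}$, $N\in\Lambda^{fi}(M)$; $\mathcal{O}(LgSpec(M))$ is its frame of open sets. A frame is a complete lattice in which finite meets distribute over arbitrary joins. *)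

(* Defs.v *)
From HB Require Import structures.
From mathcomp Require Import all_boot all_algebra.
Set Implicit Arguments. Unset Strict Implicit. Unset Printing Implicit Defensive.
Import GRing.Theory.
Local Open Scope ring_scope.

Section Order.
Variable T : Type.

Definition incl (A B : T -> Prop) : Prop := forall x, A x -> B x.

Variable (S : T -> Prop) (le : T -> T -> Prop).

Definition is_lub (X : T -> Prop) (u : T) : Prop :=
  S u /\ (forall x, X x -> le x u) /\
  (forall v, S v -> (forall x, X x -> le x v) -> le u v).

Definition is_glb (X : T -> Prop) (u : T) : Prop :=
  S u /\ (forall x, X x -> le u x) /\
  (forall v, S v -> (forall x, X x -> le v x) -> le v u).

Definition pairset (a b : T) : T -> Prop := fun z => z = a \/ z = b.

(* (S, le) is a frame: a complete lattice (every subfamily has a join and a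
   meet in S) in which binary meets distribute over arbitrary joins:
   a /\ (\/ X) = \/ { a /\ x | x in X }. *)
Definition is_frame : Prop :=
  (forall X, (forall x, X x -> S x) -> exists u, is_lub X u) /\
  (forall X, (forall x, X x -> S x) -> exists u, is_glb X u) /\
  (forall a X j m, S a -> (forall x, X x -> S x) ->
     is_lub X j -> is_glb (pairset a j) m ->
     is_lub (fun y => exists x, X x /\ is_glb (pairset a x) y) m).
End Order.

Section Modules.
Variable R : pzRingType.

Definition M_generated (M K : lmodType R) : Prop :=
  forall k : K, exists n (f : 'I_n -> {linear M -> K}) (m : 'I_n -> M),
    k = \sum_(i < n) f i (m i).

Definition in_sigma (M N : lmodType R) : Prop :=
  exists (K : lmodType R) (g : {linear N -> K}), M_generated M K /\ injective g.

Definition proj_in_sigma (M : lmodType R) : Prop :=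
  forall (A B : lmodType R) (g : {linear A -> B}) (f : {linear M -> B}),
    in_sigma M A -> in_sigma M B -> (forall b, exists a, g a = b) ->
    exists h : {linear M -> A}, forall x, g (h x) = f x.

Variable M : lmodType R.

Definition is_submodule (N : M -> Prop) : Prop :=
  N 0 /\ (forall x y, N x -> N y -> N (x + y)) /\
  (forall (r : R) x, N x -> N (r *: x)).

Definition fully_invariant (N : M -> Prop) : Prop :=
  is_submodule N /\ forall (f : {linear M -> M}) x, N x -> N (f x).

(* N_M L = sum { f(N) | f in Hom_R(M, L) } (finite sums of such images) *)
Definition prodM (N L : M -> Prop) : M -> Prop := fun x =>
  exists n (f : 'I_n -> {linear M -> M}) (m : 'I_n -> M),
    (forall i y, L (f i y)) /\ (forall i, N (m i)) /\
    x = \sum_(i < n) f i (m i).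

Definition semiprime (N : M -> Prop) : Prop :=
  fully_invariant N /\ ~ (forall x, N x) /\
  (forall K, fully_invariant K -> incl (prodM K K) N -> incl K N).

Definition SP (N : M -> Prop) : Prop := semiprime N \/ (forall x, N x).

Definition LgSpec (P : M -> Prop) : Prop :=
  is_submodule P /\ ~ (forall x, P x) /\
  (forall N L, fully_invariant N -> fully_invariant L ->
     incl (prodM N L) P -> incl N P \/ incl L P).

Definition Uopen (N : M -> Prop) : (M -> Prop) -> Prop :=
  fun P => LgSpec P /\ ~ incl N P.

Definition opens (O : (M -> Prop) -> Prop) : Prop :=
  exists N, fully_invariant N /\ O = Uopen N.
End Modules.

(* Main.v *)
From HB Require Import structures.
From mathcomp Require Import all_boot all_algebra.
From mathcomp Require Import boolp.
From mathcomp Require classical_sets.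
From Stdlib Require Import ClassicalEpsilon.
Require Import Defs.
Set Implicit Arguments. Unset Strict Implicit. Unset Printing Implicit Defensive.
Import GRing.Theory.
Local Open Scope ring_scope.

Lemma myZorn (T : Type) (P : (T -> Prop) -> Prop) :
  (forall F : (T -> Prop) -> Prop, (forall A, F A -> P A) ->
     (forall A B, F A -> F B -> incl A B \/ incl B A) ->
     P (fun x => exists A, F A /\ A x)) ->
  exists A, P A /\ forall B, incl A B -> ~ incl B A -> ~ P B.
Proof.
move=> H.
have [A [PA Amax]] : exists A, P A /\ forall B, classical_sets.proper A B -> ~ P B.
  apply: classical_sets.Zorn_bigcup.
  move=> F FP Ftot; have := H F FP Ftot.
  congr P; apply: funext => x; apply: propext; split.
    by case=> A [FA Ax]; exists A.
  by case=> A FA Ax; exists A.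
exists A; split=> // B AB BA PB; apply: (Amax B) => //; split=> //.
Qed.

Section Sub.
Variables (R : pzRingType) (V : lmodType R) (P : V -> Prop) (hP : is_submodule P).
Definition Sp : {pred V} := fun x => `[< P x >].
Lemma Sp_closed : subsemimod_closed Sp.
Proof.
case: hP => h0 [hD hZ]; split; first split.
- by apply/asboolP.
- by move=> x y /asboolP Hx /asboolP Hy; apply/asboolP; apply: hD.
- by move=> a x /asboolP Hx; apply/asboolP; apply: hZ.
Qed.
Record subV (h : is_submodule P) := SubV { sval_ : V; svalP_ : Sp sval_ }.
HB.instance Definition _ := [isSub for @sval_ hP].
HB.instance Definition _ := [Choice of subV hP by <:].
HB.instance Definition _ := GRing.SubChoice_isSubLmodule.Build R V Sp (subV hP) Sp_closed.
Lemma subV_P (u : subV hP) : P (val u).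
Proof. exact/asboolP/(svalP_ u). Qed.
End Sub.
Arguments subV {R V P} h.
Arguments SubV {R V P h sval_} svalP_.

Section MkLin.
Variables (R : pzRingType) (U V : lmodType R) (F : U -> V) (pf : linear F).
Definition mkLinF := F.
HB.instance Definition _ := GRing.isLinear.Build R U V *:%R mkLinF pf.
Definition mkLin : {linear U -> V} := mkLinF.
Lemma mkLinE x : mkLin x = F x. Proof. by []. Qed.
End MkLin.
Arguments mkLin {R U V} F pf.

Definition sumP (R : pzRingType) (M : lmodType R) (A B : M -> Prop) : M -> Prop :=
  fun z => exists a b, A a /\ B b /\ z = a + b.

Lemma sumP_sub (R : pzRingType) (M : lmodType R) (A B : M -> Prop) :
  is_submodule A -> is_submodule B -> is_submodule (sumP A B).
Proof.
move=> [A0 [AD AZ]] [B0 [BD BZ]]; split; first by exists 0, 0; rewrite addr0.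
split.
  move=> x y [a [b [Ha [Hb ->]]]] [a' [b' [Ha' [Hb' ->]]]].
  exists (a + a'), (b + b'); split; first exact: AD.
  by split; [exact: BD|rewrite addrACA].
move=> r x [a [b [Ha [Hb ->]]]]; exists (r *: a), (r *: b).
by split; [exact: AZ|split; [exact: BZ|rewrite scalerDr]].
Qed.

Lemma gen_self (R : pzRingType) (M : lmodType R) : M_generated M M.
Proof.
move=> k; exists 1%N, (fun _ => mkLin (fun x : M => x) (fun a u v => erefl)), (fun _ => k).
by rewrite big_ord1.
Qed.

Lemma gen_pair (R : pzRingType) (M : lmodType R) : M_generated M (M * M)%type.
Proof.
have l1 : linear (fun x : M => (x, 0 : M)).
  by move=> a u v; apply: injective_projections; rewrite /= ?scaler0 ?addr0.
have l2 : linear (fun x : M => (0 : M, x)).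
  by move=> a u v; apply: injective_projections; rewrite /= ?scaler0 ?addr0.
move=> k; exists 2%N, (fun i : 'I_2 => if val i == 0%N then mkLin (fun x : M => (x, 0 : M)) l1 else mkLin (fun x : M => (0 : M, x)) l2).
exists (fun i : 'I_2 => if val i == 0%N then k.1 else k.2).
rewrite !big_ord_recl big_ord0 /= addr0.
case: k => a b; apply: injective_projections; by rewrite /= ?addr0 ?add0r.
Qed.

Lemma decomp (R : pzRingType) (M : lmodType R) (C D : M -> Prop) :
  proj_in_sigma M -> is_submodule C -> is_submodule D ->
  forall f : {linear M -> M}, (forall y, sumP C D (f y)) ->
  exists g h : {linear M -> M}, (forall y, C (g y)) /\ (forall y, D (h y)) /\
     (forall y, f y = g y + h y).
Proof.
move=> proj hC hD f hf.
have hA : @is_submodule R (M * M)%type (fun p => C p.1 /\ D p.2).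
  case: hC => C0 [CD CZ]; case: hD => D0 [DD DZ]; split; first by [].
  split; first by move=> x y [? ?] [? ?]; split; [exact: CD|exact: DD].
  by move=> r x [? ?]; split; [exact: CZ|exact: DZ].
have hB := sumP_sub hC hD.
have gP : forall a : subV hA, Sp (sumP C D) ((val a).1 + (val a).2).
  move=> a; apply/asboolP; have [ha1 ha2] := subV_P a; by exists (val a).1, (val a).2.
pose g0 := fun a : subV hA => (SubV (gP a) : subV hB).
have lg : linear g0.
  move=> r u v; apply: val_inj; by rewrite /= scalerDr addrACA.
have fP : forall y, Sp (sumP C D) (f y) by move=> y; apply/asboolP.
pose f0 := fun y => (SubV (fP y) : subV hB).
have lf : linear f0.
  by move=> r u v; apply: val_inj; rewrite /= !linearP.
have [] := proj _ _ (mkLin g0 lg) (mkLin f0 lf).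
- exists (M * M)%type, (val : {linear subV hA -> (M * M)%type}); split; [exact: gen_pair|exact: val_inj].
- exists M, (val : {linear subV hB -> M}); split; [exact: gen_self|exact: val_inj].
- move=> b; have := subV_P b => -[c [d [Hc [Hd E]]]].
  have aP : Sp (fun p : M * M => C p.1 /\ D p.2) (c, d) by apply/asboolP.
  exists (SubV aP); apply: val_inj => /=; by rewrite E.
move=> h Hh.
have l1 : linear (fun y => (val (h y)).1) by move=> r u v; rewrite !linearP.
have l2 : linear (fun y => (val (h y)).2) by move=> r u v; rewrite !linearP.
exists (mkLin _ l1), (mkLin _ l2); split; last split.
- by move=> y; case: (subV_P (h y)).
- by move=> y; case: (subV_P (h y)).
- by move=> y; have := congr1 val (Hh y).
Qed.

Section Main.
Variables (R : pzRingType) (M : lmodType R).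
Implicit Types (N L A B P K : M -> Prop).

Definition compL (g f : {linear M -> M}) : {linear M -> M}.
refine (mkLin (fun y => g (f y)) _).
by move=> a u v; rewrite !linearP.
Defined.

Definition idL : {linear M -> M} := mkLin (fun y : M => y) (fun a u v => erefl).

Lemma sum_in P n (F : 'I_n -> M) : is_submodule P -> (forall i, P (F i)) ->
  P (\sum_(i < n) F i).
Proof.
move=> [P0 [PD _]] HF; apply: (big_ind P) => // i _; exact: HF.
Qed.

Lemma prodM_subR N L : is_submodule L -> incl (prodM N L) L.
Proof.
move=> hL x [n [f [m [Hf [Hm ->]]]]]; apply: sum_in => // i; exact: Hf.
Qed.

Lemma prodM_sub A N L : fully_invariant A -> incl N A -> incl (prodM N L) A.
Proof.
move=> [hA hAf] NA x [n [f [m [Hf [Hm ->]]]]]; apply: sum_in => // i.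
by apply: hAf; apply: NA.
Qed.

Lemma prodM_mono N N' L L' : incl N N' -> incl L L' ->
  incl (prodM N L) (prodM N' L').
Proof.
move=> HN HL x [n [f [m [Hf [Hm ->]]]]]; exists n, f, m; split.
  by move=> i y; apply: HL.
by split=> // i; apply: HN.
Qed.

Lemma prodM_fi N L : (forall r x, N x -> N (r *: x)) -> fully_invariant L ->
  fully_invariant (prodM N L).
Proof.
move=> NZ [hL hLf]; split; first split.
- exists 0%N, (fun _ => idL), (fun _ => 0); split; first by move=> [].
  by split; [move=> []|rewrite big_ord0].
- split.
  + move=> x y [n [f [m [Hf [Hm ->]]]]] [n' [f' [m' [Hf' [Hm' ->]]]]].
    exists (n + n')%N, (fun i => match split i with inl j => f j | inr j => f' j end).
    exists (fun i => match split i with inl j => m j | inr j => m' j end).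
    split; first by move=> i z; case: (split i).
    split; first by move=> i; case: (split i).
    rewrite big_split_ord /=.
    congr (_ + _); apply: eq_bigr => i _.
      by rewrite -[lshift _ _]/(unsplit (inl _)) unsplitK.
    by rewrite -[rshift _ _]/(unsplit (inr _)) unsplitK.
  + move=> r x [n [f [m [Hf [Hm ->]]]]].
    exists n, f, (fun i => r *: m i); split=> //; split; first by move=> i; apply: NZ.
    by rewrite scaler_sumr; apply: eq_bigr => i _; rewrite linearZ.
- move=> g x [n [f [m [Hf [Hm ->]]]]].
  exists n, (fun i => compL g (f i)), m; split.
    by move=> i y; exact: (hLf g _ (Hf i y)).
  by split=> //; rewrite raddf_sum.
Qed.


Lemma sumP_fi A B : fully_invariant A -> fully_invariant B ->
  fully_invariant (sumP A B).
Proof.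
move=> [hA hAf] [hB hBf]; split; first exact: sumP_sub.
move=> f x [a [b [Ha [Hb ->]]]]; exists (f a), (f b).
by split; [exact: hAf|split; [exact: hBf|rewrite raddfD]].
Qed.

Lemma key_prod A C P : proj_in_sigma M -> fully_invariant A ->
  fully_invariant C -> fully_invariant P -> incl (prodM A C) P ->
  incl (prodM (sumP A P) (sumP C P)) P.
Proof.
move=> proj [hA hAf] [hC hCf] [hP hPf] AC x [n [f [m [Hf [Hm ->]]]]].
apply: sum_in => // i.
have [g [h [Hg [Hh Hgh]]]] := decomp proj hC hP (Hf i).
have [a [b [Ha [Hb ->]]]] := Hm i.
case: hP => P0 [PD PZ].
rewrite Hgh raddfD; apply: (PD); last exact: Hh.
apply: (PD); last exact: hPf.
apply: AC; exists 1%N, (fun _ => g), (fun _ => a); split; first by move=> _ y; exact: Hg.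
by split=> //; rewrite big_ord1.
Qed.

Definition fic P : M -> Prop := fun x => forall f : {linear M -> M}, P (f x).

Lemma fic_fi P : is_submodule P -> fully_invariant (fic P).
Proof.
move=> [P0 [PD PZ]]; split; first split.
- by move=> f; rewrite raddf0.
- split; first by move=> x y Hx Hy f; rewrite raddfD; apply: PD; [exact: Hx|exact: Hy].
  by move=> r x Hx f; rewrite linearZ; apply: PZ; exact: Hx.
- by move=> g x Hx f; exact: (Hx (compL f g)).
Qed.

Lemma fic_sub P : incl (fic P) P.
Proof. by move=> x Hx; exact: (Hx idL). Qed.

Lemma fic_max N P : fully_invariant N -> incl N P -> incl N (fic P).
Proof. by move=> [_ hNf] NP x Nx f; apply: NP; apply: hNf. Qed.

Definition cl (y : M) : M -> Prop :=
  prodM (fun z => exists r, z = r *: y) (fun _ => True).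

Lemma cl_fi y : fully_invariant (cl y).
Proof.
apply: prodM_fi.
  by move=> r x [s ->]; exists (r * s); rewrite scalerA.
by split=> //; split.
Qed.

Lemma cl_in y : cl y y.
Proof.
exists 1%N, (fun _ => idL), (fun _ => y); split=> //; split.
  by move=> _; exists 1; rewrite scale1r.
by rewrite big_ord1.
Qed.

Lemma cl_min A y : fully_invariant A -> A y -> incl (cl y) A.
Proof.
move=> hA Ay; apply: prodM_sub => // z [r ->].
by case: hA => [[_ [_ PZ]] _]; apply: PZ.
Qed.

Lemma LgSpec_fic P : LgSpec P -> LgSpec (fic P).
Proof.
move=> [hP [Pn Pp]]; split; first by case: (fic_fi hP).
split; first by move=> H; apply: Pn => x; apply: fic_sub; apply: H.
move=> N' L' hN hL NL.
have [H|H] := Pp N' L' hN hL (fun x hx => fic_sub (NL x hx)).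
  by left; apply: fic_max.
by right; apply: fic_max.
Qed.

Lemma prime_SP P : LgSpec P -> fully_invariant P -> SP P.
Proof.
move=> [hP [Pn Pp]] hPf; left; split=> //; split=> // K hK KK.
by case: (Pp K K hK hK KK).
Qed.

Lemma SP_fi N : SP N -> fully_invariant N.
Proof.
case; first by case.
move=> H; split; first by split=> //; split.
by [].
Qed.

Lemma exist_prime N x : proj_in_sigma M -> semiprime N -> ~ N x ->
  exists P, LgSpec P /\ fully_invariant P /\ incl N P /\ ~ P x.
Proof.
move=> proj [hN [Nn Nsp]] Nx.
pose Q := fun y z => prodM (cl y) (cl y) z /\ ~ N z.
pose step := fun y : M => epsilon (inhabits (0:M)) (Q y).
have stepP : forall y, ~ N y -> Q y (step y).
  move=> y Ny; apply: (epsilon_spec (inhabits (0:M)) (Q y)).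
  apply: NNPP => H; apply: Ny.
  apply: (Nsp (cl y) (cl_fi y) _ y (cl_in y)) => z hz.
  by apply: NNPP => nz; apply: H; exists z.
pose xs := fun i => iter i step x.
have xsN : forall i, ~ N (xs i).
  by elim => [|i IH] //=; exact: (stepP _ IH).2.
have xsS : forall i, prodM (cl (xs i)) (cl (xs i)) (xs i.+1).
  by move=> i; exact: (stepP _ (xsN i)).1.
have clS : forall i, incl (cl (xs i.+1)) (cl (xs i)).
  move=> i; apply: cl_min; first exact: cl_fi.
  by apply: (prodM_subR (proj1 (cl_fi _))); exact: xsS.
have clD : forall i k, incl (cl (xs (i + k)%N)) (cl (xs i)).
  move=> i; elim=> [|k IH]; first by rewrite addn0.
  by rewrite addnS => z hz; apply: IH; exact: clS.
pose good := fun A => fully_invariant A /\ incl N A /\ forall i, ~ A (xs i).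
pose Pz := fun A => good A \/ forall z, ~ A z.
have goodN : good N by split=> //; split.
have PzE : forall A z, Pz A -> A z -> good A.
  by move=> A z [//|H] Az; case: (H z Az).
have [P0 [PzP0 P0max]] : exists A, Pz A /\ forall B, incl A B -> ~ incl B A -> ~ Pz B.
  apply: myZorn.
  move=> F FP Ftot.
  case: (classic (exists z A, F A /\ A z)) => [[z0 [A0 [FA0 A0z]]]|Hn]; last first.
    by right=> z [A [FA Az]]; apply: Hn; exists z, A.
  left.
  have gA : forall A z, F A -> A z -> good A.
    by move=> A z FA Az; exact: (PzE A z (FP A FA) Az).
  have [[[A00 _] _] _] := gA _ _ FA0 A0z.
  split; first split; first split.
  - by exists A0.
  - split.
    + move=> u v [A1 [FA1 A1u]] [A2 [FA2 A2v]].
      case: (Ftot _ _ FA1 FA2) => [H12|H21].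
      * have [[[_ [AD _]] _] _] := gA _ _ FA2 A2v.
        by exists A2; split=> //; apply: AD => //; exact: H12.
      * have [[[_ [AD _]] _] _] := gA _ _ FA1 A1u.
        by exists A1; split=> //; apply: AD => //; exact: H21.
    + move=> r u [A1 [FA1 A1u]]; have [[[_ [_ AZ]] _] _] := gA _ _ FA1 A1u.
      by exists A1; split=> //; exact: AZ.
  - move=> f u [A1 [FA1 A1u]]; have [[_ Af] _] := gA _ _ FA1 A1u.
    by exists A1; split=> //; exact: Af.
  - split.
      by move=> z Nz; exists A0; split=> //; exact: (gA _ _ FA0 A0z).2.1.
    by move=> i [A1 [FA1 A1x]]; exact: ((gA _ _ FA1 A1x).2.2 i A1x).
have gP0 : good P0.
  case: PzP0 => // Hemp; exfalso; apply: (P0max N).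
  - by move=> z hz; case: (Hemp z hz).
  - by move=> H; case: hN => [[N0 _] _]; exact: (Hemp 0 (H 0 N0)).
  - by left.
case: gP0 => hP0 [NP0 xsP0].
have P00 : P0 0 by case: hP0 => [[]].
exists P0; split; last by split=> //; split=> //; exact: (xsP0 0%N).
split; first exact: hP0.1.
split; first by move=> H; exact: (xsP0 0%N (H _)).
move=> N' L' hN' hL' NL.
case: (classic (incl N' P0)) => [|nN]; first by left.
case: (classic (incl L' P0)) => [|nL]; first by right.
exfalso.
have hit : forall B, fully_invariant B -> ~ incl B P0 -> exists i, sumP B P0 (xs i).
  move=> B hB nB; apply: NNPP => H.
  have B0 : B 0 by case: hB => [[]].
  have hS := sumP_fi hB hP0.
  apply: (P0max (sumP B P0)).
  - by move=> z Pz0; exists 0, z; split=> //; split=> //; rewrite add0r.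
  - move=> H'; apply: nB => z Bz; apply: H'.
    by exists z, 0; split=> //; split=> //; rewrite addr0.
  - left; split=> //; split.
      by move=> z Nz; exists 0, z; split=> //; split; [exact: NP0|rewrite add0r].
    by move=> i Hi; apply: H; exists i.
have [i Hi] := hit N' hN' nN.
have [j Hj] := hit L' hL' nL.
pose k := maxn i j.
have c1 : incl (cl (xs k)) (sumP N' P0).
  move=> z hz; apply: (cl_min (sumP_fi hN' hP0) Hi).
  by have := clD i (k - i)%N; rewrite subnKC ?leq_maxl //; apply.
have c2 : incl (cl (xs k)) (sumP L' P0).
  move=> z hz; apply: (cl_min (sumP_fi hL' hP0) Hj).
  by have := clD j (k - j)%N; rewrite subnKC ?leq_maxr //; apply.
apply: (xsP0 k.+1); apply: (key_prod proj hN' hL' hP0 NL).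
exact: (prodM_mono c1 c2 (xsS k)).
Qed.

Lemma SP_inter (X : (M -> Prop) -> Prop) : (forall A, X A -> SP A) ->
  SP (fun z => forall A, X A -> A z).
Proof.
move=> XS; case: (classic (forall z, forall A, X A -> A z)) => [H|H]; first by right.
have hX : forall A, X A -> fully_invariant A := fun A XA => SP_fi (XS A XA).
left; split; first split; first split.
- by move=> A XA; case: (hX A XA) => [[]].
- split.
  + move=> u v Hu Hv A XA; case: (hX A XA) => [[_ [AD _]] _].
    by apply: AD; [exact: Hu|exact: Hv].
  + move=> r u Hu A XA; case: (hX A XA) => [[_ [_ AZ]] _].
    by apply: AZ; exact: Hu.
- move=> f u Hu A XA; case: (hX A XA) => [_ Af]; apply: Af; exact: Hu.
split; first exact: H.
move=> K hK KK z Kz A XA; case: (XS A XA) => [[_ [_ Asp]]|Afull]; last exact: Afull.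
exact: (Asp K hK (fun y hy => KK y hy A XA) z Kz).
Qed.

Lemma sep N z : proj_in_sigma M -> SP N -> ~ N z ->
  exists P, LgSpec P /\ fully_invariant P /\ incl N P /\ ~ P z.
Proof.
move=> proj [Nsp|Nf] Nz; first exact: exist_prime.
by case: (Nz (Nf z)).
Qed.

Lemma frame : proj_in_sigma M -> is_frame (@SP R M) (@incl M).
Proof.
move=> proj.
have glb : forall X, (forall x, X x -> SP x) ->
    is_glb (@SP R M) (@incl M) X (fun z => forall A, X A -> A z).
  move=> X XS; split; first exact: SP_inter.
  split; first by move=> x Xx z Hz; exact: Hz x Xx.
  by move=> v _ Hv z vz A XA; exact: Hv A XA z vz.
split.
  move=> X XS; exists (fun z => forall v, SP v /\ (forall x, X x -> incl x v) -> v z).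
  split; first by apply: SP_inter => v [].
  split; first by move=> x Xx z xz v [_ Hv]; exact: Hv x Xx z xz.
  by move=> v Sv Hv z Hz; exact: Hz v (conj Sv Hv).
split; first by move=> X XS; eexists; exact: glb.
move=> a X j m Sa SX [Sj [jup jle]] [Sm [mlow mle]].
have ma : incl m a := mlow a (or_introl erefl).
have mj : incl m j := mlow j (or_intror erefl).
split=> //; split.
  move=> y [x [Xx [Sy [ylow _]]]]; apply: mle => // w [->|->].
    exact: ylow a (or_introl erefl).
  move=> z yz; apply: (jup x Xx z); exact: ylow x (or_intror erefl) z yz.
move=> v Sv vup z mz; apply: NNPP => vz.
have [P [PL [Pfi [vP Pz]]]] := sep proj Sv vz.
apply: Pz.
case: (classic (incl a P)) => [aP|naP]; first exact: aP z (ma z mz).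
have XP : forall x, X x -> incl x P.
  move=> x Xx; have [PS [Pn Pp]] := PL.
  case: (Pp a x (SP_fi Sa) (SP_fi (SX x Xx))) => //.
  move=> w hw; apply: vP; apply: (vup (fun u => forall A, pairset a x A -> A u)).
    exists x; split=> //; apply: glb => A [->|->] //; exact: SX.
  move=> A [->|->].
    exact: (prodM_sub (SP_fi Sa) (fun u hu => hu) hw).
  exact: (prodM_subR (SP_fi (SX x Xx)).1 hw).
exact: (jle P (prime_SP PL Pfi) XP z (mj z mz)).
Qed.

Lemma part3 O : opens O -> exists N, SP N /\ Uopen N = O.
Proof.
move=> [N0 [hN0 ->]].
pose N' := fun z => forall P, LgSpec P -> incl N0 P -> fic P z.
have N0N' : incl N0 N' by move=> z hz P PL NP; exact: (fic_max hN0 NP).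
exists N'; split.
  case: (classic (forall z, N' z)) => [H|H]; first by right.
  have hX : forall P, LgSpec P -> fully_invariant (fic P).
    by move=> P [hP _]; exact: fic_fi.
  left; split; first split; first split.
  - by move=> P PL _; case: (hX P PL) => [[]].
  - split.
    + move=> u v Hu Hv P PL NP; case: (hX P PL) => [[_ [AD _]] _].
      by apply: AD; [exact: Hu|exact: Hv].
    + move=> r u Hu P PL NP; case: (hX P PL) => [[_ [_ AZ]] _].
      by apply: AZ; exact: Hu.
  - move=> f u Hu P PL NP; case: (hX P PL) => [_ Af]; apply: Af; exact: Hu.
  split; first exact: H.
  move=> K hK KK z Kz P PL NP.
  have [_ [_ Pp]] := PL.
  have KP : incl (prodM K K) P by move=> y hy; apply: fic_sub; exact: KK y hy P PL NP.
  by case: (Pp K K hK hK KP) => KP'; apply: (fic_max hK KP').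
apply: funext => P; apply: propext; split.
  move=> [PL nP]; split=> // H; apply: nP => z hz; exact: (fic_sub (hz P PL H)).
move=> [PL nP]; split=> // H; apply: nP => z hz; exact: (H z (N0N' z hz)).
Qed.

Lemma part4 N1 N2 : proj_in_sigma M -> SP N1 -> SP N2 ->
  (incl N1 N2 <-> incl (Uopen N1) (Uopen N2)).
Proof.
move=> proj S1 S2; split.
  move=> H12 P [PL nP]; split=> // H; apply: nP => z hz; exact: H (H12 z hz).
move=> HU z hz; apply: NNPP => nz.
have [P [PL [Pfi [NP Pz]]]] := sep proj S2 nz.
case: (classic (incl N1 P)) => [H|H]; first exact: Pz (H z hz).
by have [_ ] := HU P (conj PL H); apply.
Qed.

End Main.

Theorem proposition4p27 (R : pzRingType) (M : lmodType R) :
  proj_in_sigma M ->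
  is_frame (@SP R M) (@incl M) /\
  (forall N : M -> Prop, SP N -> @opens R M (Uopen N)) /\
  (forall O, @opens R M O -> exists N : M -> Prop, SP N /\ Uopen N = O) /\
  (forall N1 N2 : M -> Prop, SP N1 -> SP N2 ->
     (incl N1 N2 <-> incl (Uopen N1) (Uopen N2))).
Proof.
move=> proj; split; first exact: frame.
split; first by move=> N SN; exists N; split=> //; exact: SP_fi.
split; first exact: part3.
move=> N1 N2; exact: part4.
Qed.
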